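(* Let $f$ be a DNF with $k$ terms and let $y\in\{0,1\}^n$ satisfy $f_{>\tau}$ and not $f_{\le\tau}$ ($\tau=1000k$). Fix any permutation $\pi$ and let $z_0,z_1,\dots$ be the sweep process started at $y$. Let $i$ be such that $(z_i)_a=y_a$ for all $a\in P(y)$, and let $U_i$ be the set of unanimous indices of $\mathcal{T}_f(z_i)$. If $\mathcal{T}_f(z_i)\setminus(P(y)\cup U_i)$ contains a stripped term of length at most $k$, then $\textsc{GenerateCandidateStem}(f,z_i)$ outputs a valid stem of a term of $f$ satisfied by $y$.
   Context: Terms are sets of literals, a DNF is a set of terms; $|T|$ is the number of literals; $g_{\le L}$ / $g_{>L}$ are the sub-DNFs of terms of length $\le L$ / $>L$. $\mathcal{T}_f(x)$ is the set of terms of $f$ satisfied by $x$. A term $T'$ is a valid stem of a term $T$ if $T'\subseteq T$ and $|T\setminus T'|\le 2k$. Protected set $P(y)$: for each term $T\in f$ not satisfied by $y$, take the literal of $T$ with smallest index not satisfied by $y$; $P(y)$ is the set of these indices. For a term $T$ and $S\subseteq[n]$, the stripped term $T\setminus S$ removes from $T$ all literals $x_i,\overline{x_i}$ with $i\in S$; for a set of terms, stripping is applied to each. Unanimous indices of a set of terms $\mathcal{T}$: all $i$ such that every term of $\mathcal{T}$ contains $x_i$, or every term contains $\overline{x_i}$. $x^{\oplus j}$ is $x$ with bit $j$ flipped. $\textsc{GenerateCandidateStem}(f,x)$: let $I=\{i: f(x^{\oplus i})=0\}$ and output the term $\{x_i:i\in I,x_i=1\}\cup\{\overline{x_i}: i\in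 I, x_i=0\}$. Sweep process: given $y$ with $f(y)=1$ and a permutation $\pi$ listing $[n]$ as $\pi(0),\dots,\pi(n-1)$, $z_0=y$, and $z_{t+1}=z_t^{\oplus\pi(t)}$ if $f(z_t^{\oplus\pi(t)})=1$, else $z_{t+1}=z_t$. *)

(* Defs.v *)
From mathcomp Require Import all_boot all_order perm.
Set Implicit Arguments. Unset Strict Implicit. Unset Printing Implicit Defensive.

(* Assignments x in {0,1}^n, literals (i, b) meaning x_i (b = true) or
   ~x_i (b = false), terms = finite sets of literals, DNFs = sets of terms. *)
Definition assign (n : nat) := {ffun 'I_n -> bool}.
Definition lit (n : nat) := ('I_n * bool)%type.
Definition term (n : nat) := {set lit n}.
Definition dnf (n : nat) := {set term n}.

Section DNF.
Variable n : nat.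

Definition lit_sat (x : assign n) (l : lit n) : bool := x l.1 == l.2.
Definition term_sat (x : assign n) (T : term n) : bool :=
  [forall l in T, lit_sat x l].
Definition eval (f : dnf n) (x : assign n) : bool :=
  [exists T in f, term_sat x T].

Definition dnf_le (g : dnf n) (L : nat) : dnf n := [set T in g | #|T| <= L].
Definition dnf_gt (g : dnf n) (L : nat) : dnf n := [set T in g | L < #|T|].

Definition sat_terms (f : dnf n) (x : assign n) : {set term n} :=
  [set T in f | term_sat x T].

Definition valid_stem (k : nat) (T' T : term n) : bool :=
  (T' \subset T) && (#|T :\: T'| <= 2 * k).

Definition protected_set (f : dnf n) (y : assign n) : {set 'I_n} :=
  [set i : 'I_n | [exists T in f, ~~ term_sat y T &&
     [exists b : bool, ((i, b) \in T) && ~~ lit_sat y (i, b)] &&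
     [forall l in T, ~~ lit_sat y l ==> (i <= l.1)%N]]].

Definition strip (T : term n) (S : {set 'I_n}) : term n :=
  [set l in T | l.1 \notin S].

Definition unanimous (Ts : {set term n}) : {set 'I_n} :=
  [set i : 'I_n | [forall T in Ts, (i, true) \in T] ||
                  [forall T in Ts, (i, false) \in T]].

Definition flip (x : assign n) (j : 'I_n) : assign n :=
  [ffun a => if a == j then ~~ x a else x a].

Definition generate_candidate_stem (f : dnf n) (x : assign n) : term n :=
  [set l : lit n | ~~ eval f (flip x l.1) && (l.2 == x l.1)].

(* one step of the sweep process, at time t (no-op for t >= n) *)
Definition sweep_step (f : dnf n) (pi : {perm 'I_n}) (t : nat) (z : assign n)
  : assign n :=
  if insub t is Some o then
    (if eval f (flip z (pi o)) then flip z (pi o) else z)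
  else z.

Fixpoint sweep (f : dnf n) (pi : {perm 'I_n}) (y : assign n) (t : nat)
  : assign n :=
  match t with
  | 0 => y
  | t'.+1 => sweep_step f pi t' (sweep f pi y t')
  end.

End DNF.

(* Main.v *)
Require Import Defs.
From mathcomp Require Import all_boot all_order perm.
Set Implicit Arguments. Unset Strict Implicit. Unset Printing Implicit Defensive.

Section Proof.
Variables (n : nat) (f : dnf n) (y z : assign n).
Hypothesis Hz : forall a, a \in protected_set f y -> z a = y a.

Lemma flipE (x : assign n) j a : flip x j a = if a == j then ~~ x a else x a.
Proof. by rewrite /flip ffunE. Qed.

Lemma lit_eq_idx (x : assign n) (l l' : lit n) :
  lit_sat x l -> lit_sat x l' -> l.1 = l'.1 -> l = l'.
Proof.
case: l l' => [a b] [a' b'] /=; rewrite /lit_sat /= => /eqP <- /eqP <- e.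
by subst.
Qed.

Lemma prot_exists T : T \in f -> ~~ term_sat y T ->
  exists2 l, l \in T & (~~ lit_sat y l) && (l.1 \in protected_set f y).
Proof.
move=> Tf /forallPn [l0]; rewrite negb_imply => /andP[l0T l0n].
pose Q := [pred l : lit n | (l \in T) && ~~ lit_sat y l].
have Pl0 : Q l0 by rewrite /Q /= l0T.
case: (@arg_minnP _ l0 Q (fun l : lit n => val l.1) Pl0) => l /andP[lT ln] lmin.
exists l => //; rewrite ln /= inE; apply/existsP; exists T.
rewrite Tf /=; apply/andP; split; first (apply/andP; split).
- by apply/forallPn; exists l; rewrite negb_imply lT.
- by apply/existsP; exists l.2; rewrite -surjective_pairing lT.
apply/forallP => l'; apply/implyP => l'T; apply/implyP => nl'.
by apply: lmin; rewrite /Q /= l'T.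
Qed.

Definition R (j : 'I_n) (T : term n) : bool :=
  [exists b, ((j, b) \in T) && ~~ lit_sat z (j, b)] &&
  (([exists b, ((j, b) \in T) && ~~ lit_sat y (j, b)] &&
    [forall l in T, ~~ lit_sat y l ==> (j <= l.1)%N]) ||
   [forall l in T, ~~ lit_sat z l ==> (l.1 == j)]).

Lemma R_inj j1 j2 T : R j1 T -> R j2 T -> j1 = j2.
Proof.
case/andP=> /existsP[b1 /andP[h1 u1]] H1.
case/andP=> /existsP[b2 /andP[h2 u2]] H2.
case/orP: H1 => [/andP[/existsP[c1 /andP[g1 v1]] F1] | C1].
  case/orP: H2 => [/andP[/existsP[c2 /andP[g2 v2]] F2] | C2].
    apply: val_inj; apply/eqP; rewrite eqn_leq.
    by rewrite (implyP (forall_inP F1 _ g2) v2) (implyP (forall_inP F2 _ g1) v1).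
  by apply/eqP; exact: (implyP (forall_inP C2 _ h1) u1).
by apply/esym/eqP; exact: (implyP (forall_inP C1 _ h2) u2).
Qed.

Lemma flip_sat_idx j (l : lit n) :
  lit_sat (flip z j) l -> ~~ lit_sat z l -> l.1 = j.
Proof.
move=> h1 h2; apply/eqP; apply: contraTT h1 => ne; by rewrite /lit_sat flipE (negPf ne).
Qed.

Lemma main_gen (k : nat) T0 :
  #|f| = k ->
  T0 \in sat_terms f z ->
  (#|strip T0 (protected_set f y :|: unanimous (sat_terms f z))| <= k)%N ->
  exists2 T, (T \in f) && term_sat y T &
    valid_stem k (generate_candidate_stem f z) T.
Proof.
move=> Hk; rewrite inE => /andP[T0f T0z] Hs.
set P := protected_set f y; set U := unanimous (sat_terms f z).
exists T0.
  rewrite T0f /=; apply/negPn/negP => ny.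
  have [l lT /andP[ln lP]] := prot_exists T0f ny.
  move: (forall_inP T0z l lT); rewrite /lit_sat (Hz lP).
  by move: ln; rewrite /lit_sat => /negPf ->.
have Gsub : generate_candidate_stem f z \subset T0.
  apply/subsetP => l; rewrite inE => /andP[ne /eqP l2].
  apply/negPn/negP => lT; move/negP: ne; apply; apply/existsP; exists T0.
  rewrite T0f /=; apply/forall_inP => l' l'T.
  have sl' := forall_inP T0z l' l'T.
  rewrite /lit_sat flipE; case: (eqVneq l'.1 l.1) => [e|_]; last exact: sl'.
  have : l' = l.
    apply: (lit_eq_idx sl') => //.
    by rewrite /lit_sat l2.
  by move=> E; rewrite E in l'T; rewrite l'T in lT.
rewrite /valid_stem Gsub /=.
set B := [set j | (j \in P :|: U) && eval f (flip z j)].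
set S2 := [set l in T0 | (l.1 \in P :|: U) && eval f (flip z l.1)].
have sub1 : T0 :\: generate_candidate_stem f z \subset strip T0 (P :|: U) :|: S2.
  apply/subsetP => l /setDP[lT nG]; apply/setUP.
  case E: (l.1 \in P :|: U); [right|left]; rewrite in_set ?lT ?E //=.
  move: nG; rewrite in_set negb_and negbK => /orP[] // ne.
  by move: (forall_inP T0z l lT); rewrite /lit_sat eq_sym (negPf ne).
have cS2 : (#|S2| <= #|B|)%N.
  have inj : {in S2 &, injective (fun l : lit n => l.1)}.
    move=> l l'; rewrite !inE => /andP[lT _] /andP[l'T _].
    exact: lit_eq_idx (forall_inP T0z l lT) (forall_inP T0z l' l'T).
  rewrite -(card_in_imset inj); apply: subset_leq_card.
  apply/subsetP => j /imsetP[l]; rewrite !inE => /andP[_ h] ->; exact: h.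
have cB : (#|B| <= k)%N.
  pose g j := odflt set0 [pick T in f | R j T].
  have ex : forall j, j \in B -> exists2 T, T \in f & R j T.
    move=> j; rewrite in_set => /andP[/setUP[jP | jU] ev].
      move: (jP); rewrite /P in_set => /existsP[T /andP[Tf /andP[/andP[nT Eb] Fa]]].
      exists T => //; rewrite /R; apply/andP; split; last first.
        by apply/orP; left; rewrite Eb Fa.
      case/existsP: Eb => b /andP[jb nb]; apply/existsP; exists b.
      by rewrite jb /lit_sat /= (Hz jP).
    case/existsP: ev => T /andP[Tf Tfl]; exists T => //.
    have nz : ~~ term_sat z T.
      apply/negP => Tz.
      have TS : T \in sat_terms f z by rewrite inE Tf Tz.
      move: jU; rewrite /U in_set => /orP[] /forall_inP /(_ T TS) jb.
        move: (forall_inP Tfl _ jb) (forall_inP Tz _ jb).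
        by rewrite /lit_sat flipE eqxx /=; case: (z j).
      move: (forall_inP Tfl _ jb) (forall_inP Tz _ jb).
      by rewrite /lit_sat flipE eqxx /=; case: (z j).
    have C : [forall l in T, ~~ lit_sat z l ==> (l.1 == j)].
      apply/forall_inP => l lT; apply/implyP => nl; apply/eqP.
      exact: flip_sat_idx (forall_inP Tfl l lT) nl.
    rewrite /R C orbT andbT.
    case/forallPn: nz => l; rewrite negb_imply => /andP[lT nl].
    apply/existsP; exists l.2.
    have e : l.1 = j := flip_sat_idx (forall_inP Tfl l lT) nl.
    by rewrite -e -surjective_pairing lT nl.
  have gP : forall j, j \in B -> (g j \in f) && R j (g j).
    move=> j /ex [T Tf RT]; rewrite /g.
    case: pickP => [T' /andP[] -> -> //|/(_ T)]; by rewrite Tf RT.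
  have inj : {in B &, injective g}.
    move=> j1 j2 /gP /andP[_ R1] /gP /andP[_ R2] e.
    rewrite e in R1; exact: R_inj R1 R2.
  rewrite -(card_in_imset inj) -Hk; apply: subset_leq_card.
  by apply/subsetP => T /imsetP[j /gP /andP[]] ? _ ->.
apply: leq_trans (subset_leq_card sub1) _.
apply: leq_trans (leq_card_setU _ _) _.
by rewrite mul2n -addnn leq_add // (leq_trans cS2 cB).
Qed.

End Proof.

Theorem lemma4p11 (n k : nat) (f : dnf n) (y : assign n) (pi : {perm 'I_n})
  (i : nat) :
  #|f| = k ->
  eval (dnf_gt f (1000 * k)) y ->
  ~~ eval (dnf_le f (1000 * k)) y ->
  (i <= n)%N ->
  (forall a, a \in protected_set f y -> sweep f pi y i a = y a) ->
  (exists2 T, T \in sat_terms f (sweep f pi y i) &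
     (#|strip T (protected_set f y :|: unanimous (sat_terms f (sweep f pi y i)))|
        <= k)%N) ->
  exists2 T, (T \in f) && term_sat y T &
    valid_stem k (generate_candidate_stem f (sweep f pi y i)) T.
Proof.
move=> Hk _ _ _ Hz [T0 T0S Hs].
exact: (main_gen Hz Hk T0S Hs).
Qed.
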